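(* Let $C\subseteq(\mathbb{R}^d,\operatorname{dist})$ be the attractor of an iterated function system of finitely many maps $f_i(x)=\lambda_i x+t_i$ with $\lambda_i\in(0,1)$ and $t_i\in\mathbb{R}^d$, such that $f_i(B[0,1])\subseteq B[0,1]$ for all $i$. For a word $I=i_1\cdots i_k$ let $S_I:=f_{i_1}\circ\cdots\circ f_{i_k}(B[0,1])$ (so $S_\emptyset=B[0,1]$, $S_i=B[t_i,\lambda_i]$). Then: (1) if $S_\emptyset\setminus\bigcup_i S_i\neq\emptyset$, \[h_\emptyset\le\max_{x\in S_\emptyset\setminus\bigcup_iS_i}\ \min_i\frac{\operatorname{dist}(x,t_i)-\lambda_i}{1-\lambda_i};\] (2) $\tau(C,\{S_I\}_I)\ge\frac{\min_j\lambda_j}{h_\emptyset}$; (3) the system $\{S_I\}_I$ is $(2\max_i\lambda_i+h_\emptyset)$-uniformly dense.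
   Context: $\mathbb{R}^d$ carries a distance $\operatorname{dist}$ induced by a norm; $B[x,\rho]$ is the closed ball of center $x$ and radius $\rho$. A system of balls for a compact set $C$ is a family $\{S_I\}_I$ of closed balls indexed by finite words with each $S_I$ containing its finitely many children $S_{I,j}$, $C=\bigcap_{n\ge0}\bigcup_{\ell(I)=n}S_I$, and radii tending to $0$ along every infinite branch. $h_I:=\max_{x\in S_I}\operatorname{dist}(x,C)$; thickness $\tau(C,\{S_I\}_I):=\inf_I\frac{\min_i\operatorname{rad}(S_{I,i})}{h_I}$. The system is $r$-uniformly dense if for every $I$ and every ball $B\subseteq S_I$ with $\operatorname{rad}(B)\ge r\operatorname{rad}(S_I)$ there is a child $S_{I,i}\subseteq B$. *)

(* Defs.v *)
From HB Require Import structures.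
From mathcomp Require Import all_boot all_order all_algebra.
From mathcomp Require Import all_classical all_reals all_analysis.
Set Implicit Arguments. Unset Strict Implicit. Unset Printing Implicit Defensive.
Import Order.TTheory GRing.Theory Num.Theory.
Import numFieldNormedType.Exports.
Local Open Scope classical_set_scope.
Local Open Scope ring_scope.

(* The ambient space is R^d = 'rV[R]_d, equipped with an ARBITRARY norm N
   (dist x y := N (x - y)).  Its topology (used for compactness of C) is the
   standard one, which all norms on R^d induce. *)
Definition is_norm (R : realType) (d : nat) (N : 'rV[R]_d -> R) : Prop :=
  [/\ (forall x, 0 <= N x),
      (forall x, N x = 0 -> x = 0),
      (forall (a : R) x, N (a *: x) = `|a| * N x) &
      (forall x y, N (x + y) <= N x + N y)].

Definition cball (R : realType) (d : nat) (N : 'rV[R]_d -> R)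
  (c : 'rV[R]_d) (r : R) : set 'rV[R]_d := [set y | N (y - c) <= r].

Definition ifs_map (R : realType) (d m : nat) (lam : 'I_m.+1 -> R)
  (t : 'I_m.+1 -> 'rV[R]_d) (i : 'I_m.+1) (x : 'rV[R]_d) : 'rV[R]_d :=
  lam i *: x + t i.

Definition is_attractor (R : realType) (d m : nat) (lam : 'I_m.+1 -> R)
  (t : 'I_m.+1 -> 'rV[R]_d) (C : set 'rV[R]_d) : Prop :=
  [/\ C !=set0, compact C &
      C = \bigcup_(i in [set: 'I_m.+1]) (ifs_map lam t i @` C)].

Definition word_map (R : realType) (d m : nat) (lam : 'I_m.+1 -> R)
  (t : 'I_m.+1 -> 'rV[R]_d) (I : seq 'I_m.+1) : 'rV[R]_d -> 'rV[R]_d :=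
  foldr (fun i g => ifs_map lam t i \o g) id I.

(* S_I := f_{i_1} o ... o f_{i_k} (B[0,1]); children of S_I are S_{I j} = S (rcons I j) *)
Definition S_ (R : realType) (d m : nat) (N : 'rV[R]_d -> R) (lam : 'I_m.+1 -> R)
  (t : 'I_m.+1 -> 'rV[R]_d) (I : seq 'I_m.+1) : set 'rV[R]_d :=
  word_map lam t I @` cball N 0 1.

(* rad(S_I): S_I is the closed ball of radius lam_{i_1} ... lam_{i_k} *)
Definition rad_ (R : realType) (m : nat) (lam : 'I_m.+1 -> R)
  (I : seq 'I_m.+1) : R := \prod_(i <- I) lam i.

Definition dist_set (R : realType) (d : nat) (N : 'rV[R]_d -> R)
  (C : set 'rV[R]_d) (x : 'rV[R]_d) : R := inf [set N (x - c) | c in C].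

(* h_I := max_{x in S_I} dist(x, C)  (a max, since S_I is compact) *)
Definition h_ (R : realType) (d m : nat) (N : 'rV[R]_d -> R) (lam : 'I_m.+1 -> R)
  (t : 'I_m.+1 -> 'rV[R]_d) (C : set 'rV[R]_d) (I : seq 'I_m.+1) : R :=
  sup [set dist_set N C x | x in S_ N lam t I].

Definition eratio (R : realType) (a h : R) : \bar R :=
  if h == 0 then +oo%E else (a / h)%:E.

Definition thickness (R : realType) (d m : nat) (N : 'rV[R]_d -> R)
  (lam : 'I_m.+1 -> R) (t : 'I_m.+1 -> 'rV[R]_d) (C : set 'rV[R]_d) : \bar R :=
  ereal_inf [set eratio (\big[Order.min/rad_ lam (rcons I ord0)]_(j < m.+1)
                            rad_ lam (rcons I j))
                        (h_ N lam t C I) | I in [set: seq 'I_m.+1]].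

Definition unif_dense (R : realType) (d m : nat) (N : 'rV[R]_d -> R)
  (lam : 'I_m.+1 -> R) (t : 'I_m.+1 -> 'rV[R]_d) (r : R) : Prop :=
  forall (I : seq 'I_m.+1) (x : 'rV[R]_d) (rho : R),
    cball N x rho `<=` S_ N lam t I -> r * rad_ lam I <= rho ->
    exists j : 'I_m.+1, S_ N lam t (rcons I j) `<=` cball N x rho.

(* Main.v *)
Require Import Defs.
From HB Require Import structures.
From mathcomp Require Import all_boot all_order all_algebra.
From mathcomp Require Import all_classical all_reals all_analysis.
From mathcomp Require Import lra.
Import Order.TTheory GRing.Theory Num.Theory.
Import numFieldNormedType.Exports.
Local Open Scope classical_set_scope.
Local Open Scope ring_scope.
Section Main.
Context (R : realType) (d m : nat) (N : 'rV[R]_d -> R)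
  (lam : 'I_m.+1 -> R) (t : 'I_m.+1 -> 'rV[R]_d) (C : set 'rV[R]_d).
Context (hN : is_norm N) (hlam : forall i, 0 < lam i < 1)
  (hball : forall i, ifs_map lam t i @` cball N 0 1 `<=` cball N 0 1)
  (hC : is_attractor lam t C).

Let Nge0 x : 0 <= N x. Proof. by case: hN. Qed.
Let NZ a x : N (a *: x) = `|a| * N x. Proof. by case: hN. Qed.
Let Ntri x y : N (x + y) <= N x + N y. Proof. by case: hN. Qed.
Let Neq0 x : N x = 0 -> x = 0. Proof. by case: hN => _ h _ _; apply: h. Qed.
Let N0 : N 0 = 0. Proof. by have := NZ 0 0; rewrite scale0r normr0 mul0r. Qed.
Let NN x : N (- x) = N x.
Proof. by rewrite -scaleN1r NZ normrN normr1 mul1r. Qed.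
Let NB x y : N (x - y) = N (y - x).
Proof. by rewrite -NN opprB. Qed.
Let Ntri3 x y z : N (x - z) <= N (x - y) + N (y - z).
Proof. by have := Ntri (x - y) (y - z); rewrite addrA subrK. Qed.
Let NZp a x : 0 <= a -> N (a *: x) = a * N x.
Proof. by move=> a0; rewrite NZ ger0_norm. Qed.

Let lam_gt0 i : 0 < lam i. Proof. by case/andP: (hlam i). Qed.
Let lam_lt1 i : lam i < 1. Proof. by case/andP: (hlam i). Qed.

Let wm := word_map lam t.

Lemma wm_cons i I z : word_map lam t (i :: I) z = lam i *: word_map lam t I z + t i.
Proof. by []. Qed.

Let rad_gt0 I : 0 < rad_ lam I.
Proof. rewrite /rad_; elim: I => [|i I IH]; rewrite ?big_nil ?big_cons //. exact: mulr_gt0. Qed.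

Lemma wm_affine I z : word_map lam t I z = rad_ lam I *: z + word_map lam t I 0.
Proof.
elim: I z => [|i I IH] z; first by rewrite /rad_ big_nil scale1r /= addr0.
rewrite !wm_cons (IH z) (IH 0) /rad_ big_cons scaler0 add0r scalerDr scalerA.
by rewrite addrA.
Qed.

Lemma wm_diff I x y : N (word_map lam t I x - word_map lam t I y) = rad_ lam I * N (x - y).
Proof.
rewrite (wm_affine I x) (wm_affine I y) opprD addrACA subrr addr0 -scalerBr.
by rewrite NZp // ltW.
Qed.

Lemma rad_rcons I j : rad_ lam (rcons I j) = rad_ lam I * lam j.
Proof. by rewrite /rad_ big_rcons. Qed.

Lemma wm_rcons I j z : word_map lam t (rcons I j) z = word_map lam t I (ifs_map lam t j z).
Proof. by elim: I => [|i I IH] //=; rewrite -IH. Qed.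

Lemma cballE x c r : cball N c r x = (N (x - c) <= r).
Proof. by []. Qed.

Lemma f_ball j z : N z <= 1 -> N (ifs_map lam t j z) <= 1.
Proof.
move=> hz; have := @hball j (ifs_map lam t j z).
rewrite cballE subr0; apply; exists z => //; by rewrite cballE subr0.
Qed.

Lemma wm_ball I z : N z <= 1 -> N (word_map lam t I z) <= 1.
Proof. by move=> hz; elim: I => [|i I IH] //=; apply: f_ball. Qed.

Let Ceq : C = \bigcup_(i in [set: 'I_m.+1]) (ifs_map lam t i @` C).
Proof. by case: hC. Qed.

Lemma f_C j c : C c -> C (ifs_map lam t j c).
Proof. by move=> Cc; rewrite Ceq; exists j => //; exists c. Qed.

Lemma wm_C I c : C c -> C (word_map lam t I c).
Proof. by move=> Cc; elim: I => [|i I IH] //=; apply: f_C. Qed.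

Lemma C_dec c : C c -> exists j, exists2 c', C c' & c = ifs_map lam t j c'.
Proof. by rewrite {1}Ceq => -[j _ [c' Cc' <-]]; exists j, c'. Qed.

Lemma coord_le (x : 'rV[R]_d) j : `|x 0 j| <= `|x|.
Proof.
have -> : `|x| = mx_norm x by [].
rewrite mx_normrE.
by rewrite (bigD1 (0, j)) //= le_max lexx.
Qed.

Lemma N_le_mx x : N x <= (\sum_(j < d) N 'e_j) * `|x|.
Proof.
rewrite {1}(row_sum_delta x).
apply: (@le_trans _ _ (\sum_(j < d) N (x 0 j *: 'e_j))).
  elim/big_ind2: _ => [|a1 a2 b1 b2 h1 h2|j _] //; first by rewrite N0.
  by apply: le_trans (Ntri _ _) _; apply: lerD.
rewrite mulr_suml; apply: ler_sum => j _; rewrite NZ mulrC.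
by apply: ler_wpM2l => //; apply: coord_le.
Qed.

Lemma C_boundedN : exists M, forall c, C c -> N c <= M.
Proof.
case: hC => _ cC _.
have := compact_bounded cC => /ex_strict_bound_gt0 [M M0 HM].
exists ((\sum_(j < d) N 'e_j) * M) => c Cc.
apply: le_trans (N_le_mx c) _; apply: ler_wpM2l.
  by apply: sumr_ge0 => j _.
exact: ltW (HM c Cc).
Qed.

Lemma t_le j : N (t j) <= 1 - lam j.
Proof.
have [->|t0] := eqVneq (t j) 0; first by rewrite N0 subr_ge0 ltW.
have Nt0 : 0 < N (t j).
  by rewrite lt_neqAle Nge0 andbT eq_sym; apply/eqP => /Neq0; apply/eqP.
have := f_ball j ((N (t j))^-1 *: t j).
rewrite NZp; last by rewrite invr_ge0 ltW.
rewrite mulVf ?gt_eqF // lexx => /(_ isT).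
have -> : ifs_map lam t j ((N (t j))^-1 *: t j) = (lam j * (N (t j))^-1 + 1) *: t j.
  by rewrite /ifs_map scalerDl scale1r scalerA.
rewrite NZp; last first.
  by apply: addr_ge0 => //; apply: mulr_ge0; [exact: ltW | rewrite invr_ge0 ltW].
rewrite mulrDl -mulrA mulVf ?gt_eqF // mulr1 mul1r.
by move=> h; rewrite lerBrDr addrC.
Qed.

Let L := \big[Order.max/lam ord0]_(i < m.+1) lam i.
Let lam_leL i : lam i <= L. Proof. exact: le_bigmax. Qed.
Let L_lt1 : L < 1. Proof. by apply: bigmax_lt => // i _. Qed.

Lemma C_ball c : C c -> N c <= 1.
Proof.
have [M HM] := C_boundedN.
case: hC => [[c0 Cc0] _ _].
set Sc := [set N c | c in C].
have hs : has_sup Sc by split; [exists (N c0), c0 | exists M => _ [c' Cc' <-]; apply: HM].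
have ub : forall c, C c -> N c <= sup Sc by move=> c' Cc'; apply: sup_upper_bound => //; exists c'.
move=> Cc; apply: le_trans (ub c Cc) _.
rewrite leNgt; apply/negP => Mc1.
have : sup Sc <= L * sup Sc + 1 - L.
  apply: ge_sup; first by exists (N c0), c0.
  move=> _ [c' Cc' <-]; have [j [c'' Cc'' ->]] := C_dec _ Cc'.
  rewrite /ifs_map; apply: le_trans (Ntri _ _) _; rewrite NZp; last exact: ltW.
  have h1 := ub _ Cc''; have h2 := t_le j; have h3 := lam_leL j; have h4 := lam_gt0 j.
  have h5 : lam j * N c'' <= lam j * sup Sc by apply: ler_wpM2l => //; exact: ltW.
  have h6 : 0 <= (L - lam j) * (sup Sc - 1) by apply: mulr_ge0; rewrite subr_ge0 // ltW.
  nra.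
by have := L_lt1; move=> *; nra.
Qed.

Lemma C_children c : C c -> exists j, N (c - t j) <= lam j.
Proof.
move=> Cc; have [j [c' Cc' ->]] := C_dec _ Cc; exists j.
rewrite /ifs_map addrK NZp; last exact: ltW.
by have := C_ball _ Cc'; have := lam_gt0 j; move=> *; nra.
Qed.

Let c0 : {c0 | C c0}.
Proof. by case: hC => /cid ? _ _. Qed.

Let D := dist_set N C.

Lemma D_hasinf x : has_inf [set N (x - c) | c in C].
Proof.
split; first by exists (N (x - sval c0)), (sval c0); [exact: svalP|].
by exists 0 => _ [c _ <-].
Qed.

Lemma D_le x c : C c -> D x <= N (x - c).
Proof. by move=> Cc; apply: ge_inf; [case: (D_hasinf x)|exists c]. Qed.

Lemma D_ge0 x : 0 <= D x.
Proof. by apply: lb_le_inf; [case: (D_hasinf x)|move=> _ [c _ <-]]. Qed.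

Lemma D_adh x e : 0 < e -> exists2 c, C c & N (x - c) < D x + e.
Proof. by move=> e0; have [_ [c Cc <-] h] := inf_adherent e0 (D_hasinf x); exists c. Qed.

Lemma D_tri x y : D x <= N (x - y) + D y.
Proof.
apply/ler_addgt0Pr => e e0; have [c Cc hc] := D_adh y _ e0.
apply: le_trans (D_le _ _ Cc) _; apply: le_trans (Ntri3 x y c) _.
by rewrite -addrA lerD2l ltW.
Qed.

Lemma D_wm I z : D (word_map lam t I z) <= rad_ lam I * D z.
Proof.
apply/ler_addgt0Pr => e e0.
have r0 := rad_gt0 I.
have [c Cc hc] := D_adh z _ (divr_gt0 e0 r0).
apply: le_trans (D_le _ _ (wm_C I _ Cc)) _; rewrite wm_diff.
by have := ltW hc; rewrite -(ler_pM2l r0) mulrDr mulrCA mulfV ?gt_eqF // mulr1.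
Qed.

Let h := h_ N lam t C.

Lemma ball0 : cball N 0 1 0.
Proof. by rewrite cballE subr0 N0. Qed.

Lemma S_inv I x : S_ N lam t I x -> exists2 z, N z <= 1 & x = word_map lam t I z.
Proof. by case=> z; rewrite cballE subr0 => hz <-; exists z. Qed.

Lemma S_in I z : N z <= 1 -> S_ N lam t I (word_map lam t I z).
Proof. by move=> hz; exists z => //; rewrite cballE subr0. Qed.

Lemma h_hassup I : has_sup [set D x | x in S_ N lam t I].
Proof.
split; first by exists (D (word_map lam t I 0)), (word_map lam t I 0); [apply: S_in; rewrite N0|].
exists (1 + N (sval c0)) => _ [x /S_inv [z hz ->] <-].
apply: le_trans (D_le _ _ (svalP c0)) _.
apply: le_trans (Ntri _ _) _; rewrite NN lerD2r.
exact: wm_ball.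
Qed.

Lemma D_le_h I z : N z <= 1 -> D (word_map lam t I z) <= h I.
Proof. by move=> hz; apply: sup_upper_bound; [exact: h_hassup| exists (word_map lam t I z); [apply: S_in|]]. Qed.

Lemma h_le I b : (forall z, N z <= 1 -> D (word_map lam t I z) <= b) -> h I <= b.
Proof.
move=> hb; apply: ge_sup; first by case: (h_hassup I).
by move=> _ [x /S_inv [z hz ->] <-]; apply: hb.
Qed.

Lemma h_ge0 I : 0 <= h I.
Proof. by apply: le_trans (D_ge0 (word_map lam t I 0)) (D_le_h I 0 _); rewrite N0. Qed.

Lemma h_rad I : h I <= rad_ lam I * h [::].
Proof.
apply: h_le => z hz; apply: le_trans (D_wm I z) _.
by rewrite ler_pM2l //; exact: (D_le_h [::] z hz).
Qed.

Lemma near_child z : N z <= 1 -> exists j, N (z - t j) <= h [::] + lam j.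
Proof.
move=> hz; have [//|nex] := pselect (exists j, N (z - t j) <= h [::] + lam j).
have hall j : 0 < N (z - t j) - h [::] - lam j.
  rewrite subr_gt0 ltrBrDr addrC ltNge; apply/negP => hj; apply: nex; by exists j.
set F := fun j => N (z - t j) - h [::] - lam j.
set del := \big[Order.min/F ord0]_(j < m.+1) F j.
have del0 : 0 < del by apply: lt_bigmin => [|i _]; exact: hall.
have [c Cc hc] := D_adh z _ del0.
have hDz : D z <= h [::] by exact: (D_le_h [::] z hz).
have [j hj] := C_children _ Cc.
have hdj : del <= F j by exact: bigmin_le.
have := Ntri3 z c (t j); rewrite /F in hdj; lra.
Qed.

Lemma part3 : unif_dense N lam t (2 * L + h [::]).
Proof.
move=> I x rho sub hr.
have L0 : 0 < L by apply: lt_le_trans (lam_gt0 ord0) (lam_leL ord0).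
have r0 := rad_gt0 I.
have h0 := h_ge0 [::].
have : S_ N lam t I x by apply: sub; rewrite cballE subrr N0; apply: le_trans hr; apply: mulr_ge0; [lra | exact: ltW].
case/S_inv => z hz ->.
have [j hj] := near_child z hz; exists j.
move=> y /S_inv [w hw ->]; rewrite cballE wm_rcons wm_diff.
apply: le_trans hr; rewrite mulrC ler_pM2r //.
apply: le_trans (Ntri3 _ (t j) _) _.
rewrite /ifs_map addrK NZp; last exact: ltW.
rewrite NB.
have := lam_leL j; have := lam_gt0 j.
have : lam j * N w <= lam j by rewrite -[X in _ <= X]mulr1 ler_wpM2l // ltW.
lra.
Qed.

Lemma part2 : (eratio (\big[Order.min/lam ord0]_(j < m.+1) lam j) (h [::])
   <= thickness N lam t C)%E.
Proof.
apply: le_ereal_inf_tmp => _ [I _ <-].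
set lm := \big[Order.min/lam ord0]_(j < m.+1) lam j.
have lm0 : 0 < lm by apply: lt_bigmin => [|i _]; exact: lam_gt0.
have lmj j : lm <= lam j by exact: bigmin_le.
set mr := \big[Order.min/_]_(j < m.+1) _.
have r0 := rad_gt0 I.
have hmr : rad_ lam I * lm <= mr.
  by apply: le_bigmin => [|i _]; rewrite rad_rcons ler_pM2l.
have hrad := h_rad I.
have hI0 := h_ge0 I.
have h00 := h_ge0 [::].
rewrite /eratio; case: ifPn => [/eqP e0|n0]; case: ifPn => [/eqP e1|n1]; rewrite ?leey //.
  exfalso; move: n1; rewrite -/(h I) eq_le hI0 andbT.
  by have := hrad; rewrite -/(h [::]) e0 mulr0 => ->.
have hIpos : 0 < h I by rewrite lt_neqAle eq_sym n1 hI0.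
have h0pos : 0 < h [::] by rewrite lt_neqAle eq_sym n0 h00.
rewrite lee_fin ler_pdivrMr // mulrAC ler_pdivlMr //.
have a1 : 0 <= lm * (rad_ lam I * h [::] - h I) by apply: mulr_ge0; [exact: ltW | rewrite subr_ge0].
have a2 : 0 <= h [::] * (mr - rad_ lam I * lm) by apply: mulr_ge0; [exact: ltW | rewrite subr_ge0].
change (lm * h I <= mr * h [::]); nra.
Qed.

Let F x i := (N (x - t i) - lam i) / (1 - lam i).
Let g x := \big[Order.min/F x ord0]_(i < m.+1) F x i.

Lemma g_arg x : exists i, g x = F x i.
Proof.
rewrite /g; elim/big_ind: _ => [|a b [i ->] [j ->]|i _]; first by exists ord0.
  by case: (leP (F x i) (F x j)) => _; [exists i | exists j].
by exists i.
Qed.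

Lemma S1_in i x : N (x - t i) <= lam i -> S_ N lam t [:: i] x.
Proof.
move=> hx; exists ((lam i)^-1 *: (x - t i)).
  rewrite cballE subr0 NZp; last by rewrite invr_ge0 ltW.
  by rewrite ler_pdivrMl // mulr1.
by rewrite /= /ifs_map scalerA mulfV ?gt_eqF // scale1r subrK.
Qed.

Lemma D_child i x : S_ N lam t [:: i] x -> D x <= lam i * h [::].
Proof.
case/S_inv => z hz ->; apply: le_trans (D_wm _ z) _.
rewrite /rad_ big_seq1 ler_pM2l //; exact: (D_le_h [::] z hz).
Qed.

Lemma D_radial i x : lam i < N (x - t i) -> D x <= N (x - t i) - lam i + lam i * h [::].
Proof.
move=> hx; set Dn := N (x - t i).
have Dn0 : 0 < Dn by apply: lt_trans hx.
set y := ifs_map lam t i (Dn^-1 *: (x - t i)).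
have hy : S_ N lam t [:: i] y.
  exists (Dn^-1 *: (x - t i)) => //.
  by rewrite cballE subr0 NZp ?mulVf ?gt_eqF // invr_ge0 ltW.
apply: le_trans (D_tri x y) _; apply: lerD; last exact: D_child _ _ hy.
have -> : x - y = (1 - lam i / Dn) *: (x - t i).
  by rewrite /y /ifs_map scalerA scalerBl scale1r opprD addrA addrAC.
have hl : lam i / Dn <= 1 by rewrite ler_pdivrMr // mul1r ltW.
rewrite NZp ?subr_ge0 // mulrBl mul1r -mulrA mulVf ?gt_eqF // mulr1 lexx //.
Qed.

Lemma part1 :
  let A := cball N 0 1 `\` \bigcup_(i in [set: 'I_m.+1]) S_ N lam t [:: i] in
  A !=set0 -> h [::] <= sup [set g x | x in A].
Proof.
move=> A [x0 Ax0].
have gbd x : A x -> g x <= (1 + N (t ord0)) / (1 - lam ord0).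
  case=> hx _; rewrite /g; apply: (bigmin_inf ord0) => //; rewrite /F.
  have l0 : 0 < 1 - lam ord0 by rewrite subr_gt0.
  rewrite ler_pM2r ?invr_gt0 //.
  have := Ntri3 x 0 (t ord0); rewrite subr0 add0r NN => h1.
  move: hx; rewrite cballE subr0 => hx.
  have := lam_gt0 ord0; lra.
have gpos x : A x -> 0 < g x.
  case=> _ nS; apply: lt_bigmin => [|i _]; rewrite /F divr_gt0 ?subr_gt0 //;
  rewrite ltNge; apply/negP => hle; apply: nS; [exists ord0|exists i] => //; exact: S1_in.
set G := sup [set g x | x in A].
have hs : has_sup [set g x | x in A].
  by split; [exists (g x0), x0 | exists ((1 + N (t ord0)) / (1 - lam ord0)) => _ [x Ax <-]; apply: gbd].
have gG x : A x -> g x <= G by move=> Ax; apply: sup_upper_bound => //; exists x.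
have G0 : 0 < G by apply: lt_le_trans (gpos _ Ax0) (gG _ Ax0).
rewrite leNgt; apply/negP => hG.
have key : h [::] <= (1 - L) * G + L * h [::].
  apply: h_le => z hz; rewrite [word_map _ _ _ z]/=.
  have L0 : L < 1 := L_lt1.
  have [Az|nAz] := pselect (A z).
    have [i gi] := g_arg z.
    have hgi : F z i <= G by rewrite -gi; exact: gG.
    have li := lam_leL i; have l0 := lam_gt0 i; have l1 := lam_lt1 i.
    have hz' : lam i < N (z - t i).
      case: Az => _ nS; rewrite ltNge; apply/negP => hle; apply: nS; exists i => //; exact: S1_in.
    apply: le_trans (D_radial _ _ hz') _.
    have e1 : N (z - t i) - lam i = (1 - lam i) * F z i.
      by rewrite /F mulrCA mulfV ?mulr1 // subr_eq0 eq_sym lt_eqF.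
    rewrite e1.
    have a1 : (1 - lam i) * F z i <= (1 - lam i) * G by rewrite ler_pM2l ?subr_gt0.
    have a2 : 0 <= (L - lam i) * (h [::] - G) by apply: mulr_ge0; rewrite subr_ge0 // ltW.
    nra.
  have [i _ Si] : (\bigcup_(i in [set: 'I_m.+1]) S_ N lam t [:: i]) z.
    apply: contrapT => nS; apply: nAz; split => //; by rewrite cballE subr0.
  apply: le_trans (D_child _ _ Si) _.
  have li := lam_leL i; have h0 := h_ge0 [::].
  have a2 : lam i * h [::] <= L * h [::] by apply: ler_wpM2r.
  nra.
have := L_lt1; nra.
Qed.

Lemma main_sec :
  let A := cball N 0 1 `\` \bigcup_(i in [set: 'I_m.+1]) S_ N lam t [:: i] in
  let g := fun x => \big[Order.min/((N (x - t ord0) - lam ord0) / (1 - lam ord0))]_(i < m.+1)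
                      ((N (x - t i) - lam i) / (1 - lam i)) in
  let h0 := h_ N lam t C [::] in
  [/\ (A !=set0 -> h0 <= sup [set g x | x in A]),
      (eratio (\big[Order.min/lam ord0]_(j < m.+1) lam j) h0 <= thickness N lam t C)%E &
      unif_dense N lam t (2 * \big[Order.max/lam ord0]_(i < m.+1) lam i + h0)].
Proof. move=> A g0 h0; split; [exact: part1 | exact: part2 | exact: part3]. Qed.

End Main.

Theorem lemma4p1 (R : realType) (d m : nat) (N : 'rV[R]_d -> R)
  (lam : 'I_m.+1 -> R) (t : 'I_m.+1 -> 'rV[R]_d) (C : set 'rV[R]_d)
  (hN : is_norm N)
  (hlam : forall i, 0 < lam i < 1)
  (hball : forall i, ifs_map lam t i @` cball N 0 1 `<=` cball N 0 1)
  (hC : is_attractor lam t C) :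
  let A := cball N 0 1 `\` \bigcup_(i in [set: 'I_m.+1]) S_ N lam t [:: i] in
  let g := fun x => \big[Order.min/((N (x - t ord0) - lam ord0) / (1 - lam ord0))]_(i < m.+1)
                      ((N (x - t i) - lam i) / (1 - lam i)) in
  let h0 := h_ N lam t C [::] in
  [/\ (A !=set0 -> h0 <= sup [set g x | x in A]),
      (eratio (\big[Order.min/lam ord0]_(j < m.+1) lam j) h0 <= thickness N lam t C)%E &
      unif_dense N lam t (2 * \big[Order.max/lam ord0]_(i < m.+1) lam i + h0)].
Proof. exact: (@main_sec R d m N lam t C hN hlam hball hC). Qed.
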